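(* Let $Y\in\mathbb{R}$, $Z=(Z^{(1)},\dots,Z^{(p)})\in\mathbb{R}^p$, $X=(X^{(1)},\dots,X^{(d)})\in\mathbb{R}^d$ and $W\in\mathbb{R}^d$ be random variables/vectors with finite second moments, and write $$\mathrm{Cov}\begin{pmatrix} Z\\ X\\ W\end{pmatrix}=\begin{bmatrix} A & B & C\\ B^{\mathsf T} & D & F\\ C^{\mathsf T} & F^{\mathsf T} & G\end{bmatrix},\quad A\in\mathbb{R}^{p\times p},\ B,C\in\mathbb{R}^{p\times d},\ D,F,G\in\mathbb{R}^{d\times d}.$$ Let $(\alpha,\beta_Z,\beta_X)=\arg\min_{a\in\mathbb{R},b_Z\in\mathbb{R}^p,b_X\in\mathbb{R}^d}\mathbb{E}\big[\tfrac12(Y-a-Z^{\mathsf T}b_Z-X^{\mathsf T}b_X)^2\big]$ be the population regression coefficients. Let $(Y_i,Z_i,X_i,W_i)_{i=1}^N$ be samples satisfying: (i) the samples are identically distributed with the law of $(Y,Z,X,W)$, and the sample first and second moments (all entries of the sample analogues of $\mathbb{E}[V]$ and $\mathbb{E}[VV^{\mathsf T}]$, $V=(Y,Z,X,W)$) converge in probability to the corresponding population moments as $N\to\infty$; (ii) with $\varepsilon_i=Y_i-\alpha-Z_i^{\mathsf T}\beta_Z-X_i^{\mathsf T}\beta_X$, $\varepsilon_i$ is uncorrelated with $W_i-X_i$; (iii) the covariance matrices of $(Z,W)$ and of $(Z,X)$ are positive definite. Let $\hat\beta_Z^{(\mathrm{OM})}$ be the OLS coefficient vector for $Z$ in the regression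 of $Y_i$ on an intercept and $Z_i$ (omitting $X$), and define $\mathrm{bias}^{(\mathrm{OM})}_{\beta_Z}=\operatorname{plim}_{N\to\infty}\big(\hat\beta_Z^{(\mathrm{OM})}-\beta_Z\big)$. Suppose that all entries of $X$ are pollutant concentrations and that a subset $P\subseteq\{1,\dots,p\}$ of the entries of $Z$ are pollutant concentrations. Assume: (No Benefit) $\beta_{X,j}\le 0$ for all $j\in\{1,\dots,d\}$ and $\beta_{Z,l}\le 0$ for all $l\in P$; (Weak Partial $\mathrm{PC}_+$) for each $l\in P$ and each $j\in\{1,\dots,d\}$, the partial correlation of $Z^{(l)}$ and $X^{(j)}$ conditional on $(Z^{(m)})_{m\ne l}$ is positive. Then for every $k\in P$, $\big[\mathrm{bias}^{(\mathrm{OM})}_{\beta_Z}\big]_k\le 0$.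
   Context: Partial correlation of two entries $U,V$ of a random vector given a set of other entries is the correlation between the population linear-regression residuals of $U$ and of $V$ on those other entries (equivalently, computed from the inverse covariance matrix). ''plim'' denotes limit in probability. *)

(* Defs.v *)
From Stdlib Require List.
From HB Require Import structures.
From mathcomp Require Import all_boot all_order all_algebra.
From mathcomp Require Import all_classical all_reals all_analysis.
Set Implicit Arguments. Unset Strict Implicit. Unset Printing Implicit Defensive.
Import Order.TTheory GRing.Theory Num.Theory.
Import numFieldNormedType.Exports.
Local Open Scope classical_set_scope.
Local Open Scope ring_scope.

Section Defs.
Context {d : measure_display} {T : measurableType d} {R : realType}.
Variable Pr : probability T R.

Inductive var_idx (p q : nat) : Type :=
  | VY | VZ of 'I_p | VX of 'I_q | VW of 'I_q.

Definition joint (p q : nat) (Y : T -> R) (Z : 'I_p -> T -> R)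
    (X W : 'I_q -> T -> R) (u : var_idx p q) : T -> R :=
  match u with
  | VY => Y | VZ l => Z l | VX j => X j | VW j => W j
  end.

Definition same_law (I : Type) (U V : I -> T -> R) : Prop :=
  forall s : seq (I * set R), List.Forall (fun ub => measurable ub.2) s ->
    Pr [set w | List.Forall (fun ub => ub.2 (U ub.1 w)) s] =
    Pr [set w | List.Forall (fun ub => ub.2 (V ub.1 w)) s].

Definition cvg_in_prob (Xn : nat -> T -> R) (c : R) : Prop :=
  forall eps : R, 0 < eps ->
    (fun n => Pr [set w | eps <= `|Xn n w - c|]) @ \oo --> 0%E.

(* Population mean (a real number; finite under finite second moments). *)
Definition mean (U : T -> R) : R := fine ('E_Pr[U])%E.

Definition cov (U V : T -> R) : R := fine (covariance Pr U V).

Definition covmx (n : nat) (V : 'I_n -> T -> R) : 'M[R]_n :=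
  \matrix_(i, j) cov (V i) (V j).

Definition catRV (m n : nat) (V1 : 'I_m -> T -> R) (V2 : 'I_n -> T -> R)
    : 'I_(m + n) -> T -> R :=
  fun i => match fintype.split i with inl a => V1 a | inr b => V2 b end.

(* Partial correlation of entries i and j of V given all other entries of V,
   computed from the inverse covariance (precision) matrix. *)
Definition pcor (n : nat) (V : 'I_n -> T -> R) (i j : 'I_n) : R :=
  let O := invmx (covmx V) in - O i j / Num.sqrt (O i i * O j j).

Definition ols_Z (p : nat) (Ys : nat -> T -> R) (Zs : nat -> 'I_p -> T -> R)
    (N : nat) (w : T) : 'I_p -> R :=
  let D : 'M[R]_(N, 1 + p) :=
    \matrix_(i < N, c < 1 + p)
      match fintype.split c with inl _ => 1 | inr l => Zs i l w end in
  let y : 'cV[R]_N := \col_(i < N) Ys i w in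
  let theta := invmx (D^T *m D) *m (D^T *m y) in
  fun l => theta (rshift 1 l) 0.

End Defs.

Definition posdef {R : realType} (n : nat) (M : 'M[R]_n) : Prop :=
  forall v : 'cV[R]_n, v != 0 -> 0 < (v^T *m M *m v) 0 0.

(* Main.v *)
Require Import Defs.
From HB Require Import structures.
From mathcomp Require Import all_boot all_order all_algebra.
From mathcomp Require Import all_classical all_reals all_analysis.
From mathcomp Require Import ring lra perm measurable_realfun.
Import Order.TTheory GRing.Theory Num.Theory.
Import numFieldNormedType.Exports.
Local Open Scope classical_set_scope.
Local Open Scope ring_scope.
Section Alg.
Variable R : realType.

Lemma posdef_unit n (M : 'M[R]_n) : posdef M -> M \in unitmx.
Proof.
move=> pM; rewrite unitmxE unitfE; apply/negP => /det0P [v v0 vM].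
suff : 0 < (v *m M *m v^T) 0 0 by rewrite vM mul0mx mxE ltxx.
have := pM v^T; rewrite trmxK; apply.
by apply: contra v0 => /eqP h; rewrite -[v]trmxK h trmx0.
Qed.

Lemma sum_delta n (f : 'I_n) (g : 'I_n -> R) :
  \sum_x ((x == f)%:R * g x) = g f.
Proof.
rewrite (bigD1 f) //= eqxx mul1r big1 ?addr0 // => x /negbTE ->; by rewrite mul0r.
Qed.

Lemma posdef_sub n m (M : 'M[R]_n) (f : 'I_m -> 'I_n) :
  injective f -> posdef M -> posdef (\matrix_(a, b) M (f a) (f b)).
Proof.
move=> fi pM v v0.
pose S : 'M[R]_(n, m) := \matrix_(x, a) (x == f a)%:R.
have StS : S^T *m S = 1%:M.
  apply/matrixP => a b; rewrite !mxE.
  under eq_bigr do rewrite !mxE.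
  by rewrite sum_delta (inj_eq fi).
have E : \matrix_(a, b) M (f a) (f b) = S^T *m M *m S.
  apply/matrixP => a b; rewrite !mxE.
  under [RHS]eq_bigr do rewrite !mxE.
  rewrite (eq_bigr (fun y => (y == f b)%:R * (\sum_j S^T a j * M j y))); last first.
    by move=> y _; rewrite mulrC.
  rewrite sum_delta.
  under eq_bigr do rewrite !mxE.
  by rewrite (@sum_delta _ (f a) (fun j => M j (f b))).
rewrite E.
have -> : v^T *m (S^T *m M *m S) *m v = (S *m v)^T *m M *m (S *m v).
  by rewrite trmx_mul !mulmxA.
apply: pM; apply: contra v0 => /eqP h.
by rewrite -[v]mul1mx -StS -mulmxA h mulmx0.
Qed.
End Alg.
Section Ct.
Variable R : realType.
Variable I : Type.
Variable c : I -> R.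

Definition ctsat (G : (I -> R) -> R) := forall e : R, 0 < e ->
  exists2 del : R, 0 < del & forall x, (forall i, `|x i - c i| < del) -> `|G x - G c| < e.

Lemma ct_ext G H : (forall x, G x = H x) -> ctsat G -> ctsat H.
Proof.
move=> GH cG e e0; have [del d0 hd] := cG e e0; exists del => // x hx.
by rewrite -!GH; apply: hd.
Qed.

Lemma ct_cst a : ctsat (fun _ => a).
Proof. by move=> e e0; exists 1 => // x _; rewrite subrr normr0. Qed.

Lemma ct_proj i : ctsat (fun x => x i).
Proof. by move=> e e0; exists e => // x hx; apply: hx. Qed.

Lemma ct_add G H : ctsat G -> ctsat H -> ctsat (fun x => G x + H x).
Proof.
move=> cG cH e e0.
have e20 : 0 < e / 2 by rewrite divr_gt0.
have [d1 d10 h1] := cG _ e20; have [d2 d20 h2] := cH _ e20.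
exists (Num.min d1 d2); first by rewrite lt_min d10 d20.
move=> x hx.
have hx1 : forall i, `|x i - c i| < d1 by move=> i; have := hx i; rewrite lt_min => /andP[].
have hx2 : forall i, `|x i - c i| < d2 by move=> i; have := hx i; rewrite lt_min => /andP[].
have := h1 _ hx1; have := h2 _ hx2.
have -> : G x + H x - (G c + H c) = (G x - G c) + (H x - H c) by ring.
move=> a b; apply: (le_lt_trans (ler_normD _ _)); lra.
Qed.

Lemma ct_opp G : ctsat G -> ctsat (fun x => - G x).
Proof.
move=> cG e e0; have [d d0 h] := cG e e0; exists d => // x hx.
by rewrite -opprD normrN; apply: h.
Qed.

Lemma ct_mul G H : ctsat G -> ctsat H -> ctsat (fun x => G x * H x).
Proof.
move=> cG cH e e0.
set a := G c; set b := H c.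
set k := `|a| + `|b| + 1.
have k1 : 1 <= k by rewrite /k; have := normr_ge0 a; have := normr_ge0 b; lra.
set t := Num.min 1 (e / (3 * k)).
have t0 : 0 < t by rewrite lt_min ltr01 divr_gt0 // mulr_gt0 //; lra.
have t1 : t <= 1 by rewrite ge_min lexx.
have tk : t * k <= e / 3.
  have : t <= e / (3 * k) by rewrite ge_min lexx orbT.
  rewrite ler_pdivlMr; last by rewrite mulr_gt0 //; lra.
  move=> h; rewrite ler_pdivlMr //; lra.
have [d1 d10 h1] := cG _ t0; have [d2 d20 h2] := cH _ t0.
exists (Num.min d1 d2); first by rewrite lt_min d10 d20.
move=> x hx.
have hx1 : forall i, `|x i - c i| < d1 by move=> i; have := hx i; rewrite lt_min => /andP[].
have hx2 : forall i, `|x i - c i| < d2 by move=> i; have := hx i; rewrite lt_min => /andP[].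
have u1 := h1 _ hx1; have v1 := h2 _ hx2.
rewrite -/a -/b in u1 v1 *.
have -> : G x * H x - a * b = (G x - a) * (H x - b) + a * (H x - b) + b * (G x - a) by ring.
set u := G x - a in u1 *; set v := H x - b in v1 *.
apply: (le_lt_trans (ler_normD _ _)).
apply: (le_lt_trans (lerD (ler_normD _ _) (lexx _))).
rewrite !normrM.
have ha : `|a| <= k by rewrite /k; have := normr_ge0 b; lra.
have hb : `|b| <= k by rewrite /k; have := normr_ge0 a; lra.
have u0 := normr_ge0 u; have v0 := normr_ge0 v; have a0 := normr_ge0 a; have b0 := normr_ge0 b.
nra.
Qed.

Lemma ct_inv G : G c != 0 -> ctsat G -> ctsat (fun x => (G x)^-1).
Proof.
move=> a0 cG e e0.
set a := G c in a0 *.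
have na : 0 < `|a| by rewrite normr_gt0.
set t := Num.min (`|a| / 2) (e * `|a| ^+ 2 / 2).
have t0 : 0 < t by rewrite lt_min !divr_gt0 // ?mulr_gt0 // exprn_gt0.
have [d d0 h] := cG _ t0; exists d => // x hx.
have u1 := h _ hx; rewrite -/a in u1.
have ta : t <= `|a| / 2 by rewrite ge_min lexx.
have te : t <= e * `|a| ^+ 2 / 2 by rewrite ge_min lexx orbT.
have hG : `|a| / 2 < `|G x|.
  have : `|a| <= `|G x - a| + `|G x| by have := ler_normD (a - G x) (G x); rewrite subrK distrC.
  lra.
have Gx0 : G x != 0 by rewrite -normr_gt0; lra.
have -> : (G x)^-1 - a^-1 = (a - G x) / (G x * a) by field; rewrite Gx0 a0.
rewrite normrM normfV normrM distrC.
rewrite ltr_pdivrMr; last by rewrite mulr_gt0 //; lra.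
have : `|a| / 2 * `|a| <= `|G x| * `|a| by rewrite ler_pM2r //; lra.
have : e * `|a| ^+ 2 / 2 = e * (`|a| / 2 * `|a|) by rewrite expr2; field.
nra.
Qed.

Lemma ct_sum (J : Type) (s : seq J) (F : J -> (I -> R) -> R) :
  (forall j, ctsat (F j)) -> ctsat (fun x => \sum_(j <- s) F j x).
Proof.
move=> cF; elim: s => [|j s IH].
  by apply: (@ct_ext (fun _ => 0)) => [x|]; rewrite ?big_nil //; apply: ct_cst.
apply: (@ct_ext (fun x => F j x + \sum_(j <- s) F j x)) => [x|]; first by rewrite big_cons.
exact: ct_add.
Qed.

Lemma ct_prod (J : Type) (s : seq J) (F : J -> (I -> R) -> R) :
  (forall j, ctsat (F j)) -> ctsat (fun x => \prod_(j <- s) F j x).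
Proof.
move=> cF; elim: s => [|j s IH].
  by apply: (@ct_ext (fun _ => 1)) => [x|]; rewrite ?big_nil //; apply: ct_cst.
apply: (@ct_ext (fun x => F j x * \prod_(j <- s) F j x)) => [x|]; first by rewrite big_cons.
exact: ct_mul.
Qed.

Lemma ct_det n (Mf : (I -> R) -> 'M[R]_n) :
  (forall i j, ctsat (fun x => Mf x i j)) -> ctsat (fun x => \det (Mf x)).
Proof.
move=> cM.
apply: (@ct_ext (fun x => \sum_(s : 'S_n) (-1) ^+ s * \prod_i Mf x i (s i))).
  by move=> x; rewrite /determinant.
apply: ct_sum => s; apply: ct_mul; first exact: ct_cst.
by apply: ct_prod => i; apply: cM.
Qed.

Lemma ct_adj n (Mf : (I -> R) -> 'M[R]_n) :
  (forall i j, ctsat (fun x => Mf x i j)) -> forall i j, ctsat (fun x => \adj (Mf x) i j).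
Proof.
move=> cM i j.
apply: (@ct_ext (fun x => (-1) ^+ (j + i) * \det (row' j (col' i (Mf x))))).
  by move=> x; rewrite mxE /cofactor.
apply: ct_mul; first exact: ct_cst.
by apply: ct_det => a b; rewrite /=; under [fun _ => _]funext do rewrite !mxE; apply: cM.
Qed.

End Ct.
Section Prob.
Context {dsp : measure_display} {T : measurableType dsp} {R : realType}.
Variable Pr : probability T R.

Lemma meas_dev (f : T -> R) (c e : R) : measurable_fun setT f ->
  measurable [set w | e <= `|f w - c|].
Proof.
move=> mf.
have mg : measurable_fun setT (fun w => e <= `|f w - c|).
  apply: measurable_fun_ler; first exact: measurable_cst.
  apply: measurableT_comp => //; apply: measurable_funB => //; exact: measurable_cst.
have := mg measurableT [set true] I; rewrite setTI.
by congr measurable; apply/seteqP; split => w /=.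
Qed.

Lemma union_bound (J : Type) (s : seq J) (A : J -> set T) :
  (forall j, measurable (A j)) ->
  (Pr (\big[setU/set0]_(j <- s) A j) <= \sum_(j <- s) Pr (A j))%E.
Proof.
move=> mA; elim: s => [|j s IH]; first by rewrite !big_nil measure0.
rewrite !big_cons; apply: (le_trans (measureU2 _ _ _)) => //.
  by apply: bigsetU_measurable.
by apply: leeD.
Qed.

Lemma in_bigU (J : eqType) (s : seq J) (A : J -> set T) j w :
  j \in s -> A j w -> (\big[setU/set0]_(j <- s) A j) w.
Proof.
elim: s => [//|k s IH]; rewrite inE big_cons => /orP[/eqP <- Ajw|js Ajw].
  by left.
by right; apply: IH.
Qed.

Lemma cvg_sumr (J : Type) (s : seq J) (u : J -> nat -> R) :
  (forall j, u j @ \oo --> (0:R)) -> (fun n => \sum_(j <- s) u j n) @ \oo --> (0:R).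
Proof.
move=> hu; elim: s => [|j s IH].
  rewrite (_ : (fun n => _) = fun _ => 0); first exact: cvg_cst.
  by apply/funext => n; rewrite big_nil.
rewrite (_ : (fun n => _) = u j \+ (fun n => \sum_(j <- s) u j n)); last first.
  by apply/funext => n; rewrite big_cons.
have h := cvgD (hu j) IH; rewrite addr0 in h; exact: h.
Qed.

Lemma cip_main (I : finType) (U : I -> nat -> T -> R) (c : I -> R)
  (H : nat -> T -> R) (h : R) :
  (forall i N, measurable_fun setT (U i N)) ->
  (forall i, cvg_in_prob Pr (U i) (c i)) ->
  (forall N, measurable_fun setT (H N)) ->
  (forall e, 0 < e -> exists2 del, 0 < del & forall N w, (0 < N)%N ->
     (forall i, `|U i N w - c i| < del) -> `|H N w - h| < e) ->
  cvg_in_prob Pr H h.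
Proof.
move=> mU cU mH cont e e0.
have [del d0 hd] := cont e e0.
pose B i N := [set w | del <= `|U i N w - c i|].
have mB : forall i N, measurable (B i N) by move=> i N; apply: meas_dev.
have mS : forall N, measurable [set w | e <= `|H N w - h|] by move=> N; apply: meas_dev.
apply/fine_cvgP; split.
  by apply: nearW => N; apply: (fin_num_measure Pr).
have cB : forall i, (fun N => fine (Pr (B i N))) @ \oo --> (0:R).
  by move=> i; have /fine_cvgP[] := cU i del d0.
apply: (@squeeze_cvgr _ _ _ _ (fun _ => 0) (fun N => \sum_(i : I) fine (Pr (B i N)))).
- near=> N; apply/andP; split; first by rewrite fine_ge0 // measure_ge0.
  have N0 : (0 < N)%N by near: N; exists 1%N.
  rewrite sum_fine; last by move=> i _; apply: (fin_num_measure Pr).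
  rewrite fine_le //; first by apply: (fin_num_measure Pr).
    by apply/sum_fin_numP => i _ _; apply: (fin_num_measure Pr).
  apply: (le_trans _ (@union_bound _ (index_enum I) (fun i => B i N) (fun i => mB i N))).
  apply: le_measure; rewrite ?inE //; first by apply: bigsetU_measurable.
  move=> w /= hw; apply: contrapT => hn.
  have : forall i, `|U i N w - c i| < del.
    move=> i; rewrite ltNge; apply/negP => hi; apply: hn.
    by apply: (@in_bigU _ _ _ i) => //; rewrite mem_index_enum.
  by move/(hd N w N0); rewrite ltNge hw.
- exact: cvg_cst.
- exact: cvg_sumr.
Unshelve. all: end_near.
Qed.
End Prob.
Section Meas.
Context {dsp : measure_display} {T : measurableType dsp} {R : realType}.

Lemma measurable_inv : measurable_fun setT (@GRing.inv R).
Proof.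
have -> : [set: R] = [set 0] `|` ~` [set 0] by rewrite setUv.
apply/measurable_funU => //; first exact: measurableC.
split.
  move=> _ Y mY; case: (pselect (Y (0 : R)^-1)) => h.
    have -> : [set 0] `&` GRing.inv @^-1` Y = [set (0:R)].
      by apply/seteqP; split => x /=; [case | move=> ->; split].
    by [].
  have -> : [set 0] `&` GRing.inv @^-1` Y = set0.
    by apply/seteqP; split => x //= [-> ].
  by [].
apply: open_continuous_measurable_fun.
  by rewrite openC; apply/accessible_closed_set1/hausdorff_accessible/Rhausdorff.
move=> x; rewrite inE /= => /eqP x0; exact: inv_continuous.
Qed.

Lemma mf_inv (f : T -> R) : measurable_fun setT f ->
  measurable_fun setT (fun w => (f w)^-1).
Proof. by move=> mf; apply: measurableT_comp => //; exact: measurable_inv. Qed.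

Lemma mf_sum (J : Type) (s : seq J) (h : J -> T -> R) :
  (forall j, measurable_fun setT (h j)) ->
  measurable_fun setT (fun w => \sum_(j <- s) h j w).
Proof. exact: measurable_sum. Qed.

Lemma mf_prod (J : eqType) (s : seq J) (h : J -> T -> R) :
  (forall j, measurable_fun setT (h j)) ->
  measurable_fun setT (fun w => \prod_(j <- s) h j w).
Proof. by move=> mh; apply: measurable_prod => j _. Qed.

Lemma mf_mul (f g : T -> R) : measurable_fun setT f -> measurable_fun setT g ->
  measurable_fun setT (fun w => f w * g w).
Proof. exact: measurable_funM. Qed.

Lemma mf_det n (Mf : T -> 'M[R]_n) :
  (forall i j, measurable_fun setT (fun w => Mf w i j)) ->
  measurable_fun setT (fun w => \det (Mf w)).
Proof.
move=> mM; rewrite /determinant.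
apply: mf_sum => s; apply: mf_mul; first exact: measurable_cst.
by apply: mf_prod => i; apply: mM.
Qed.

Lemma mf_adj n (Mf : T -> 'M[R]_n) :
  (forall i j, measurable_fun setT (fun w => Mf w i j)) ->
  forall i j, measurable_fun setT (fun w => \adj (Mf w) i j).
Proof.
move=> mM i j.
rewrite (_ : (fun w => _) = fun w => (-1) ^+ (j + i) * \det (row' j (col' i (Mf w)))); last first.
  by apply/funext => w; rewrite mxE /cofactor.
apply: mf_mul; first exact: measurable_cst.
apply: mf_det => a b.
rewrite (_ : (fun w => _) = fun w => Mf w (lift j a) (lift i b)); last first.
  by apply/funext => w; rewrite !mxE.
exact: mM.
Qed.

Lemma mf_invmx n (Mf : T -> 'M[R]_n) :
  (forall i j, measurable_fun setT (fun w => Mf w i j)) ->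
  forall i j, measurable_fun setT (fun w => invmx (Mf w) i j).
Proof.
move=> mM i j.
rewrite (_ : (fun w => _) = fun w => if \det (Mf w) == 0 then Mf w i j
                 else (\det (Mf w))^-1 * \adj (Mf w) i j); last first.
  apply/funext => w; rewrite /invmx unitmxE unitfE.
  by case: eqP => _ //=; rewrite mxE.
apply: measurable_fun_ifT.
- by apply: measurable_fun_eqr; [apply: mf_det | exact: measurable_cst].
- exact: mM.
- by apply: mf_mul; [apply: mf_inv; apply: mf_det | apply: mf_adj].
Qed.

Lemma mf_mulmx m n k (Af : T -> 'M[R]_(m, n)) (Bf : T -> 'M[R]_(n, k)) :
  (forall i j, measurable_fun setT (fun w => Af w i j)) ->
  (forall i j, measurable_fun setT (fun w => Bf w i j)) ->
  forall i j, measurable_fun setT (fun w => (Af w *m Bf w) i j).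
Proof.
move=> mA mB i j.
rewrite (_ : (fun w => _) = fun w => \sum_l Af w i l * Bf w l j); last first.
  by apply/funext => w; rewrite mxE.
by apply: mf_sum => l; apply: mf_mul.
Qed.
End Meas.
Section Mean.
Context {dsp : measure_display} {T : measurableType dsp} {R : realType}.
Variable Pr : probability T R.

Local Notation L1 := (Lfun Pr 1).
Local Notation L2 := (Lfun Pr 2%:E).

Lemma L2_L1 f : f \in L2 -> f \in L1.
Proof. by apply: Lfun_subset12; apply: (fin_num_measure Pr). Qed.

Lemma L2_mul f g : f \in L2 -> g \in L2 -> (fun w => f w * g w) \in L1.
Proof. exact: Lfun2_mul_Lfun1. Qed.

Lemma Lp_add r (r1 : (1 <= r)%E) (f g : T -> R) : f \in Lfun Pr r -> g \in Lfun Pr r ->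
  (fun w => f w + g w) \in Lfun Pr r.
Proof. by move=> hf hg; have /(_ r1) := rpredD hf hg. Qed.

Lemma Lp_scale r (r1 : (1 <= r)%E) (f : T -> R) a : f \in Lfun Pr r -> (fun w => a * f w) \in Lfun Pr r.
Proof. by move=> hf; have /(_ r1) := rpredZ a hf. Qed.

Lemma Lp_opp r (r1 : (1 <= r)%E) (f : T -> R) : f \in Lfun Pr r -> (fun w => - f w) \in Lfun Pr r.
Proof.
move=> hf; rewrite (_ : (fun w => - f w) = (fun w => (-1) * f w)); first exact: Lp_scale.
by apply/funext => w; rewrite mulN1r.
Qed.

Lemma Lp_sub r (r1 : (1 <= r)%E) (f g : T -> R) : f \in Lfun Pr r -> g \in Lfun Pr r ->
  (fun w => f w - g w) \in Lfun Pr r.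
Proof. by move=> hf hg; apply: Lp_add => //; apply: Lp_opp. Qed.

Lemma Lp_scaler r (r1 : (1 <= r)%E) (f : T -> R) a : f \in Lfun Pr r -> (fun w => f w * a) \in Lfun Pr r.
Proof.
move=> hf; rewrite (_ : (fun w => f w * a) = (fun w => a * f w)); first exact: Lp_scale.
by apply/funext => w; rewrite mulrC.
Qed.

Lemma Lp_sum r (r1 : (1 <= r)%E) (J : Type) (s : seq J) (F : J -> T -> R) : (forall j, F j \in Lfun Pr r) ->
  (fun w => \sum_(j <- s) F j w) \in Lfun Pr r.
Proof.
move=> hF; elim: s => [|j s IH].
  rewrite (_ : (fun w => _) = (fun _ => 0)); first by have /(_ r1) := rpred0 (Lfun Pr r).
  by apply/funext => w; rewrite big_nil.
rewrite (_ : (fun w => _) = (fun w => F j w + \sum_(j <- s) F j w)); first exact: Lp_add.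
by apply/funext => w; rewrite big_cons.
Qed.

Lemma Lp_cst r a : (fun _ : T => a) \in Lfun Pr r%:E.
Proof. exact: (Lfun_cst Pr a r). Qed.

Lemma meanD f g : f \in L1 -> g \in L1 ->
  mean Pr (fun w => f w + g w) = mean Pr f + mean Pr g.
Proof.
move=> hf hg; rewrite /mean.
have -> : (fun w => f w + g w) = f \+ g by [].
rewrite expectationD // fineD //; exact: expectation_fin_num.
Qed.

Lemma meanZr f a : f \in L1 -> mean Pr (fun w => f w * a) = mean Pr f * a.
Proof.
move=> hf; rewrite /mean.
change (fine ('E_Pr[a \o* f])%E = fine ('E_Pr[f])%E * a).
by rewrite expectationZl // fineM ?expectation_fin_num // mulrC.
Qed.

Lemma meanZ f a : f \in L1 -> mean Pr (fun w => a * f w) = a * mean Pr f.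
Proof.
move=> hf; rewrite (_ : (fun w => a * f w) = (fun w => f w * a)); last first.
  by apply/funext => w; rewrite mulrC.
by rewrite meanZr // mulrC.
Qed.

Lemma meanN f : f \in L1 -> mean Pr (fun w => - f w) = - mean Pr f.
Proof.
move=> hf; rewrite (_ : (fun w => - f w) = (fun w => (-1) * f w)); last first.
  by apply/funext => w; rewrite mulN1r.
by rewrite meanZ // mulN1r.
Qed.

Lemma meanB f g : f \in L1 -> g \in L1 ->
  mean Pr (fun w => f w - g w) = mean Pr f - mean Pr g.
Proof. by move=> hf hg; rewrite meanD ?meanN //; apply: Lp_opp. Qed.

Lemma mean_cst a : mean Pr (fun _ => a) = a.
Proof. by rewrite /mean (_ : (fun _ => a) = cst a) // expectation_cst. Qed.

Lemma mean_sum (J : Type) (s : seq J) (F : J -> T -> R) : (forall j, F j \in L1) ->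
  mean Pr (fun w => \sum_(j <- s) F j w) = \sum_(j <- s) mean Pr (F j).
Proof.
move=> hF; elim: s => [|j s IH].
  rewrite (_ : (fun w => _) = (fun _ => 0)); first by rewrite mean_cst big_nil.
  by apply/funext => w; rewrite big_nil.
rewrite (_ : (fun w => _) = (fun w => F j w + \sum_(j <- s) F j w)); last first.
  by apply/funext => w; rewrite big_cons.
by rewrite meanD ?IH ?big_cons //; apply: Lp_sum.
Qed.

Lemma covE f g : f \in L2 -> g \in L2 ->
  cov Pr f g = mean Pr (fun w => f w * g w) - mean Pr f * mean Pr g.
Proof.
move=> hf hg; have h1 := L2_L1 _ hf; have h2 := L2_L1 _ hg; have h12 := L2_mul _ _ hf hg.
rewrite /cov covarianceE //.
rewrite fineB ?fin_numM ?expectation_fin_num // fineM ?expectation_fin_num //.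
Qed.
End Mean.
Lemma quad_zero (R : realType) (q H : R) : (forall t, 0 <= - t * q + t ^+ 2 * H) -> q = 0.
Proof.
move=> h; set k := `|H| + 1.
have k0 : 0 < k by rewrite /k; have := normr_ge0 H; lra.
have Hk : H <= k by rewrite /k; have := ler_norm H; lra.
set t := q / (2 * k).
have qt : q = 2 * k * t by rewrite /t; field; rewrite gt_eqF.
have := h t; rewrite qt => h1.
have : t ^+ 2 * k <= 0 by nra.
move=> h2; have t2 : t ^+ 2 <= 0.
  by nra.
have : t = 0 by apply/eqP; rewrite -sqrf_eq0 eq_le t2 sqr_ge0.
by move=> ->; rewrite mulr0.
Qed.

Section NE.
Context {dsp : measure_display} {T : measurableType dsp} {R : realType}.
Variable Pr : probability T R.
Variables (p d : nat) (Y : T -> R) (Z : 'I_p -> T -> R) (X : 'I_d -> T -> R)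
  (alpha : R) (betaZ : 'I_p -> R) (betaX : 'I_d -> R).
Hypothesis hY : Y \in Lfun Pr 2%:E.
Hypothesis hZ : forall l, Z l \in Lfun Pr 2%:E.
Hypothesis hX : forall j, X j \in Lfun Pr 2%:E.
Hypothesis hmin : forall (a : R) (bZ : 'I_p -> R) (bX : 'I_d -> R),
     ('E_Pr[fun w => ((Y w - alpha - \sum_(l < p) Z l w * betaZ l
                        - \sum_(j < d) X j w * betaX j) ^+ 2 / 2)%R]
      <= 'E_Pr[fun w => ((Y w - a - \sum_(l < p) Z l w * bZ l
                        - \sum_(j < d) X j w * bX j) ^+ 2 / 2)%R])%E.

Definition resid w := Y w - alpha - \sum_(l < p) Z l w * betaZ l - \sum_(j < d) X j w * betaX j.

Let r12 : (1 <= 2%:E :> \bar R)%E. Proof. by rewrite lee_fin ler1n. Qed.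

Lemma resid_L2 : resid \in Lfun Pr 2%:E.
Proof.
apply: Lp_sub => //; [apply: Lp_sub => //; [apply: Lp_sub => // | ] | ].
- exact: Lp_cst.
- by apply: Lp_sum => // l; apply: Lp_scaler.
- by apply: Lp_sum => // j; apply: Lp_scaler.
Qed.

Lemma E_mean f : f \in Lfun Pr 1 -> ('E_Pr[f] = (mean Pr f)%:E)%E.
Proof. by move=> hf; rewrite /mean fineK // expectation_fin_num. Qed.

Lemma NE_gen (h : T -> R) : h \in Lfun Pr 2%:E ->
  (forall t, exists a bZ bX, forall w,
     Y w - a - \sum_(l < p) Z l w * bZ l - \sum_(j < d) X j w * bX j = resid w - t * h w) ->
  mean Pr (fun w => resid w * h w) = 0.
Proof.
move=> hh pert.
have he := resid_L2.
have Lee := L2_mul Pr _ _ he he; have Leh := L2_mul Pr _ _ he hh; have Lhh := L2_mul Pr _ _ hh hh.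
have key : forall t, mean Pr (fun w => (resid w - t * h w) ^+ 2 / 2) =
   2^-1 * mean Pr (fun w => resid w * resid w) + (- t) * mean Pr (fun w => resid w * h w)
   + (t ^+ 2 / 2) * mean Pr (fun w => h w * h w).
  move=> t.
  rewrite (_ : (fun w => _) = fun w => (2^-1 * (resid w * resid w) + (- t) * (resid w * h w))
               + (t ^+ 2 / 2) * (h w * h w)); last first.
    by apply/funext => w; field.
  rewrite meanD; last 2 first.
  - by apply: Lp_add => //; apply: Lp_scale.
  - by apply: Lp_scale.
  by rewrite meanD ?meanZ //; apply: Lp_scale.
have L1q : forall t, (fun w => (resid w - t * h w) ^+ 2 / 2) \in Lfun Pr 1.
  move=> t; rewrite (_ : (fun w => _) = fun w => (2^-1 * (resid w * resid w) + (- t) * (resid w * h w))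
               + (t ^+ 2 / 2) * (h w * h w)); last first.
    by apply/funext => w; field.
  by apply: Lp_add => //; [apply: Lp_add => //; apply: Lp_scale | apply: Lp_scale].
apply: (@quad_zero _ _ (mean Pr (fun w => h w * h w) / 2)) => t.
have [a [bZ [bX hab]]] := pert t.
have : ((mean Pr (fun w => (resid w - 0 * h w) ^+ 2 / 2))%:E <=
          (mean Pr (fun w => (resid w - t * h w) ^+ 2 / 2))%:E)%E.
  rewrite -!E_mean //.
  have -> : (fun w => (resid w - t * h w) ^+ 2 / 2) =
     (fun w => (Y w - a - \sum_(l < p) Z l w * bZ l - \sum_(j < d) X j w * bX j) ^+ 2 / 2).
    by apply/funext => w; rewrite hab.
  have -> : (fun w => (resid w - 0 * h w) ^+ 2 / 2) = (fun w => resid w ^+ 2 / 2).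
    by apply/funext => w; rewrite mul0r subr0.
  exact: hmin.
rewrite lee_fin !key.
rewrite oppr0 mul0r expr0n /= mul0r mul0r !addr0 => h1.
have := h1; lra.
Qed.


Lemma mean_lin4 (f0 g : T -> R) (a : R) (F : 'I_p -> T -> R) (b : 'I_p -> R)
  (G : 'I_d -> T -> R) (c : 'I_d -> R) :
  f0 \in Lfun Pr 1 -> g \in Lfun Pr 1 -> (forall m, F m \in Lfun Pr 1) ->
  (forall j, G j \in Lfun Pr 1) ->
  mean Pr (fun w => f0 w - a * g w - \sum_(m < p) F m w * b m - \sum_(j < d) G j w * c j)
  = mean Pr f0 - a * mean Pr g - \sum_(m < p) mean Pr (F m) * b m
    - \sum_(j < d) mean Pr (G j) * c j.
Proof.
have r11 : (1 <= 1 :> \bar R)%E by [].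
move=> h0 hg hF hG.
have L1 : (fun w => f0 w - a * g w) \in Lfun Pr 1 by apply: Lp_sub => //; apply: Lp_scale.
have L2 : (fun w => \sum_(m < p) F m w * b m) \in Lfun Pr 1.
  by apply: Lp_sum => // m; apply: Lp_scaler.
have L3 : (fun w => \sum_(j < d) G j w * c j) \in Lfun Pr 1.
  by apply: Lp_sum => // m; apply: Lp_scaler.
rewrite (meanB Pr (fun w => f0 w - a * g w - \sum_(m < p) F m w * b m)); last 2 first.
  by apply: Lp_sub.
  by [].
rewrite (meanB Pr (fun w => f0 w - a * g w)) // meanB //; last by apply: Lp_scale.
rewrite meanZ // !mean_sum; last 2 first.
  by move=> j; apply: Lp_scaler.
  by move=> j; apply: Lp_scaler.
by congr (_ - _ - _ - _); apply: eq_bigr => i _; rewrite meanZr.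
Qed.

Lemma sum_delta_r (F : 'I_p -> R) l t :
  \sum_(m < p) F m * ((m == l)%:R * t) = F l * t.
Proof.
rewrite (bigD1 l) //= eqxx mul1r big1 ?addr0 // => m /negbTE ->; by rewrite mul0r mulr0.
Qed.

Lemma NE_e : mean Pr resid = 0.
Proof.
have := @NE_gen (fun _ => 1) (Lp_cst Pr 2 1).
rewrite (_ : (fun w => resid w * 1) = resid); last by apply/funext => w; rewrite mulr1.
apply => t; exists (alpha + t), betaZ, betaX => w; rewrite /resid; ring.
Qed.

Lemma NE_Z l : mean Pr (fun w => resid w * Z l w) = 0.
Proof.
apply: NE_gen => //. move=> t.
exists alpha, (fun m => betaZ m + (m == l)%:R * t), betaX => w.
under eq_bigr do rewrite mulrDr.
rewrite big_split /= sum_delta_r /resid; ring.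
Qed.

Let hL1 f : f \in Lfun Pr 2%:E -> f \in Lfun Pr 1.
Proof. exact: L2_L1. Qed.

Lemma NE0 : mean Pr Y = alpha + \sum_(m < p) mean Pr (Z m) * betaZ m
                        + \sum_(j < d) mean Pr (X j) * betaX j.
Proof.
have := NE_e.
rewrite (_ : resid = fun w => Y w - alpha * (fun _ => 1) w - \sum_(m < p) Z m w * betaZ m
                        - \sum_(j < d) X j w * betaX j); last first.
  by apply/funext => w; rewrite /resid mulr1.
rewrite mean_lin4 //; last 4 first.
- exact: hL1.
- exact: Lp_cst.
- by move=> m; apply: hL1.
- by move=> m; apply: hL1.
rewrite mean_cst mulr1 => h; apply/eqP; rewrite -subr_eq0; apply/eqP; rewrite -[RHS]h; ring.
Qed.

Lemma NEl l : mean Pr (fun w => Z l w * Y w) = alpha * mean Pr (Z l)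
   + \sum_(m < p) mean Pr (fun w => Z l w * Z m w) * betaZ m
   + \sum_(j < d) mean Pr (fun w => Z l w * X j w) * betaX j.
Proof.
have := NE_Z l.
rewrite (_ : (fun w => resid w * Z l w) = fun w => Z l w * Y w - alpha * Z l w
                 - \sum_(m < p) (Z l w * Z m w) * betaZ m
                 - \sum_(j < d) (Z l w * X j w) * betaX j); last first.
  apply/funext => w; rewrite /resid !mulrBl !mulr_suml.
  congr (_ - _ - _ - _); rewrite ?(mulrC (Y w)) ?(mulrC alpha) //.
    by apply: eq_bigr => m _; ring.
  by apply: eq_bigr => m _; ring.
rewrite (mean_lin4 (fun w => Z l w * Y w) (Z l) alpha (fun m w => Z l w * Z m w) betaZ
            (fun j w => Z l w * X j w) betaX); last 4 first.
- exact: L2_mul.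
- exact: hL1.
- by move=> m; apply: L2_mul.
- by move=> m; apply: L2_mul.
move=> h; apply/eqP; rewrite -subr_eq0; apply/eqP; rewrite -[RHS]h; ring.
Qed.
End NE.
Lemma split_l m n (i : 'I_m) : fintype.split (lshift n i) = inl i.
Proof. exact: (@unsplitK m n (inl i)). Qed.
Lemma split_r m n (j : 'I_n) : fintype.split (rshift m j) = inr j.
Proof. exact: (@unsplitK m n (inr j)). Qed.

Lemma sum_split1 (R : realType) p (F : 'I_(1 + p) -> R) :
  \sum_a F a = F (lshift p ord0) + \sum_(m < p) F (rshift 1 m).
Proof. by rewrite big_split_ord /= big_ord1. Qed.

Section PopAlg.
Variable R : realType.
Variables (p d : nat) (EY : R) (EZ : 'I_p -> R) (EX : 'I_d -> R)
  (EZZ : 'I_p -> 'I_p -> R) (EZX : 'I_p -> 'I_d -> R) (EZY : 'I_p -> R)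
  (alpha : R) (betaZ : 'I_p -> R) (betaX : 'I_d -> R).

Definition Amx : 'M[R]_p := \matrix_(l, m) (EZZ l m - EZ l * EZ m).
Definition Bmx : 'M[R]_(p, d) := \matrix_(l, j) (EZX l j - EZ l * EX j).
Definition Mcm : 'M[R]_(1 + p) := \matrix_(a, b)
  match fintype.split a, fintype.split b with
  | inl _, inl _ => 1 | inl _, inr m => EZ m | inr l, inl _ => EZ l | inr l, inr m => EZZ l m end.
Definition mcm : 'cV[R]_(1 + p) := \col_a match fintype.split a with inl _ => EY | inr l => EZY l end.
Definition gam : 'cV[R]_p := invmx Amx *m (Bmx *m \col_j betaX j).

Hypothesis hA : Amx \in unitmx.
Hypothesis NE0 : EY = alpha + \sum_(m < p) EZ m * betaZ m + \sum_(j < d) EX j * betaX j.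
Hypothesis NEl : forall l, EZY l = alpha * EZ l + \sum_(m < p) EZZ l m * betaZ m
                               + \sum_(j < d) EZX l j * betaX j.

Lemma Mc_unit : Mcm \in unitmx.
Proof.
rewrite unitmxE unitfE; apply/negP => /det0P [v v0 vM].
have vM' : forall i j, (v *m Mcm) i j = (0 : 'rV_(1+p)) i j by move=> i j; rewrite vM.
set v0' := v 0 (lshift p ord0).
pose v1 : 'rV[R]_p := \row_m v 0 (rshift 1 m).
have e0 : v0' + \sum_(l < p) v1 0 l * EZ l = 0.
  have := vM' 0 (lshift p ord0); rewrite !mxE sum_split1 /Mcm !mxE split_l => h.
  rewrite -[RHS]h mulr1; congr (_ + _); apply: eq_bigr => l _.
  by rewrite /v1 !mxE split_r split_l.
have em : forall m, v0' * EZ m + \sum_(l < p) v1 0 l * EZZ l m = 0.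
  move=> m; have := vM' 0 (rshift 1 m); rewrite !mxE sum_split1 /Mcm !mxE split_l split_r => h.
  rewrite -[RHS]h; congr (_ + _); apply: eq_bigr => l _.
  by rewrite /v1 !mxE ?split_r.
have v1A : v1 *m Amx = 0.
  apply/matrixP => i m; rewrite (ord1 i) !mxE.
  have -> : \sum_l v1 0 l * Amx l m = \sum_l v1 0 l * EZZ l m - (\sum_l v1 0 l * EZ l) * EZ m.
    by rewrite mulr_suml -sumrB; apply: eq_bigr => l _; rewrite /Amx !mxE; ring.
  have h1 : \sum_l v1 0 l * EZZ l m = - (v0' * EZ m) by apply/eqP; rewrite -subr_eq0 opprK addrC em.
  have h2 : \sum_(l < p) v1 0 l * EZ l = - v0' by apply/eqP; rewrite -subr_eq0 opprK addrC e0.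
  rewrite h1 h2; ring.
have v10 : v1 = 0 by rewrite -(mulmxK hA v1) v1A mul0mx.
have v00 : v0' = 0.
  by move: e0; rewrite v10 big1 ?addr0 // => l _; rewrite mxE mul0r.
apply/negP: v0; rewrite negbK; apply/eqP/matrixP => i a; rewrite (ord1 i) mxE.
rewrite -(splitK a). case: (fintype.split a).
  move=> o1 /=.
  by rewrite (ord1 o1).
move=> m1 /=.
by have := congr1 (fun M : 'rV[R]_p => M 0 m1) v10; rewrite !mxE.
Qed.


Lemma theta_eq k : (invmx Mcm *m mcm) (rshift 1 k) 0 = betaZ k + gam k 0.
Proof.
set a0 := alpha + \sum_(j < d) EX j * betaX j - \sum_(m < p) EZ m * gam m 0.
pose th : 'cV[R]_(1 + p) := \col_a match fintype.split a with inl _ => a0 | inr l => betaZ l + gam l 0 end.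
have hAg : forall l, \sum_m EZZ l m * gam m 0 = \sum_j EZX l j * betaX j
     - EZ l * \sum_j EX j * betaX j + EZ l * \sum_m EZ m * gam m 0.
  move=> l.
  have := congr1 (fun M : 'cV[R]_p => M l 0) (mulKVmx hA (Bmx *m \col_j betaX j)).
  rewrite -/gam !mxE.
  under eq_bigr do rewrite /Amx mxE.
  under [in RHS]eq_bigr do rewrite /Bmx !mxE.
  have -> : \sum_j (EZZ l j - EZ l * EZ j) * gam j 0 =
            \sum_m EZZ l m * gam m 0 - EZ l * \sum_m EZ m * gam m 0.
    by rewrite mulr_sumr -sumrB; apply: eq_bigr => m _; ring.
  have -> : \sum_j (EZX l j - EZ l * EX j) * betaX j =
            \sum_j EZX l j * betaX j - EZ l * \sum_j EX j * betaX j.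
    by rewrite mulr_sumr -sumrB; apply: eq_bigr => m _; ring.
  move=> h; rewrite -h; ring.
have Mth : Mcm *m th = mcm.
  apply/matrixP => a i; rewrite (ord1 i) !mxE sum_split1 /Mcm !mxE split_l.
  under eq_bigr do rewrite !mxE split_r.
  rewrite -(splitK a); case: (fintype.split a).
    move=> o /=; rewrite split_l.
    under eq_bigr do rewrite mulrDr.
    by rewrite big_split /= NE0 /a0; ring.
  move=> l /=; rewrite split_r.
  under eq_bigr do rewrite mulrDr.
  by rewrite big_split /= NEl hAg /a0; ring.
have -> : invmx Mcm *m mcm = th by rewrite -Mth mulKmx // Mc_unit.
by rewrite mxE split_r.
Qed.

End PopAlg.
Lemma sign_lemma (R : realType) p (A : 'M[R]_p) (b : 'cV[R]_p) (S : 'M[R]_(p + 1)) :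
  posdef S ->
  (forall l m, S (lshift 1 l) (lshift 1 m) = A l m) ->
  (forall l, S (lshift 1 l) (rshift p ord0) = b l 0) ->
  A \in unitmx ->
  forall k, 0 < - invmx S (lshift 1 k) (rshift p ord0) /
      Num.sqrt (invmx S (lshift 1 k) (lshift 1 k) * invmx S (rshift p ord0) (rshift p ord0)) ->
  0 < (invmx A *m b) k 0.
Proof.
move=> pS hSA hSb hA k hk.
have hS := @posdef_unit _ _ _ pS.
set O := invmx S in hk *; set L := rshift p (@ord0 0) in hk *.
have SO : S *m O = 1%:M by rewrite mulmxV.
pose z : 'cV[R]_(p + 1) := \col_c O c L.
have Sz : forall a, (S *m z) a 0 = (a == L)%:R.
  move=> a; have := congr1 (fun M : 'M[R]_(p + 1) => M a L) SO.
  by rewrite !mxE => <-; apply: eq_bigr => c _; rewrite mxE.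
have u2pos : 0 < O L L.
  have z0 : z != 0.
    apply/negP => /eqP z0; have := Sz L; rewrite z0 mulmx0 mxE eqxx => /eqP.
    by rewrite eq_sym oner_eq0.
  have := pS z z0; rewrite -mulmxA mxE.
  under eq_bigr do rewrite Sz !mxE.
  rewrite (bigD1 L) //= eqxx mulr1 big1 ?addr0 // => a /negbTE ->; by rewrite mulr0.
pose u1 : 'cV[R]_p := \col_m O (lshift 1 m) L.
have Au1 : A *m u1 = - O L L *: b.
  apply/matrixP => l i; rewrite (ord1 i).
  have := congr1 (fun M : 'M[R]_(p + 1) => M (lshift 1 l) L) SO.
  rewrite !mxE eq_lrshift /= big_split_ord /= big_ord1 => h.
  apply/eqP; rewrite -subr_eq0; apply/eqP; rewrite -[RHS]h.
  rewrite hSb mulNr opprK; congr (_ + _); last by rewrite mulrC.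
  by apply: eq_bigr => m _; rewrite hSA mxE.
have u1E : u1 = - O L L *: (invmx A *m b).
  by rewrite scalemxAr -Au1 mulKmx.
have Ok : O (lshift 1 k) L = - O L L * (invmx A *m b) k 0.
  by have := congr1 (fun M : 'cV[R]_p => M k 0) u1E; rewrite !mxE.
rewrite Ok in hk.
have e : - (- O L L * (invmx A *m b) k 0) = O L L * (invmx A *m b) k 0 by ring.
rewrite e in hk.
rewrite ltNge; apply/negP => hle.
have : O L L * (invmx A *m b) k 0 <= 0 by rewrite pmulr_rle0.
move=> h1; move: hk; rewrite ltNge mulr_le0_ge0 // invr_ge0 sqrtr_ge0.
Qed.


Lemma invmx_entry (R : realType) n (M : 'M[R]_n) (m : 'cV[R]_n) r :
  \det M != 0 ->
  (invmx M *m m) r 0 = \sum_b ((\det M)^-1 * \adj M r b) * m b 0.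
Proof.
move=> d0; rewrite /invmx unitmxE unitfE d0 mxE.
by apply: eq_bigr => b _; rewrite mxE.
Qed.

Lemma invmx_scale (R : realType) n (M : 'M[R]_n) (m : 'cV[R]_n) (c : R) :
  c != 0 -> M \in unitmx -> invmx (c *: M) *m (c *: m) = invmx M *m m.
Proof.
move=> c0 hM; rewrite invmxZ; last by rewrite unitmxZ ?unitfE.
by rewrite -scalemxAl -scalemxAr scalerA mulVf // scale1r.
Qed.

Lemma cip_eq {dsp : measure_display} {T : measurableType dsp} {R : realType}
  (Pr : probability T R) (V1 V2 : nat -> T -> R) (c : R) :
  (forall N w, V1 N w = V2 N w) -> cvg_in_prob Pr V2 c -> cvg_in_prob Pr V1 c.
Proof.
move=> h; have -> // : V1 = V2.
by apply/funext => N; apply/funext => w; apply: h.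
Qed.

Lemma cip_one {dsp : measure_display} {T : measurableType dsp} {R : realType}
  (Pr : probability T R) :
  cvg_in_prob Pr (fun N (w : T) => N%:R^-1 * \sum_(n < N) ((1 : R) * 1)) 1.
Proof.
move=> e e0; apply: cvg_near_cst; near=> N.
have N0 : (0 < N)%N by near: N; exists 1%N.
have -> : [set w : T | e <= `|N%:R^-1 * \sum_(n < N) ((1:R) * 1) - 1|] = set0.
  apply/seteqP; split => w //= .
  rewrite mulr1 sumr_const card_ord mulVf ?pnatr_eq0 -?lt0n // subrr normr0.
  by rewrite leNgt e0.
by rewrite measure0.
Unshelve. all: end_near.
Qed.

Section MfMx.
Context {dsp : measure_display} {T : measurableType dsp} {R : realType}.

Lemma mf_subc (f : T -> R) c : measurable_fun setT f -> measurable_fun setT (fun w => f w - c).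
Proof. by move=> mf; apply: measurable_funB => //; exact: measurable_cst. Qed.

Lemma mf_tr m n (Af : T -> 'M[R]_(m, n)) :
  (forall i j, measurable_fun setT (fun w => Af w i j)) ->
  forall i j, measurable_fun setT (fun w => (Af w)^T i j).
Proof.
move=> h i j; rewrite (_ : (fun w => (Af w)^T i j) = fun w => Af w j i) //.
by apply/funext => w; rewrite mxE.
Qed.

Lemma mf_mx m n (G : T -> 'I_m -> 'I_n -> R) :
  (forall i j, measurable_fun setT (fun w => G w i j)) ->
  forall i j, measurable_fun setT (fun w => (\matrix_(i, j) G w i j) i j).
Proof.
move=> h i j; rewrite (_ : (fun w => _) = fun w => G w i j) //.
by apply/funext => w; rewrite mxE.
Qed.
End MfMx.

Theorem proposition1 (dsp : measure_display) (T : measurableType dsp)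
  (R : realType) (Pr : probability T R) (p d : nat)
  (Y : T -> R) (Z : 'I_p -> T -> R) (X W : 'I_d -> T -> R)
  (Ys : nat -> T -> R) (Zs : nat -> 'I_p -> T -> R)
  (Xs Ws : nat -> 'I_d -> T -> R)
  (alpha : R) (betaZ : 'I_p -> R) (betaX : 'I_d -> R) (Pol : {set 'I_p}) :
  (* Y, Z, X, W have finite second moments *)
  (forall u : var_idx p d, joint Y Z X W u \in Lfun Pr 2%E) ->
  (* (alpha, betaZ, betaX) are the population regression coefficients *)
  (forall (a : R) (bZ : 'I_p -> R) (bX : 'I_d -> R),
     ('E_Pr[fun w => ((Y w - alpha - \sum_(l < p) Z l w * betaZ l
                        - \sum_(j < d) X j w * betaX j) ^+ 2 / 2)%R]
      <= 'E_Pr[fun w => ((Y w - a - \sum_(l < p) Z l w * bZ l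
                        - \sum_(j < d) X j w * bX j) ^+ 2 / 2)%R])%E) ->
  (* the samples are random variables *)
  (forall (i : nat) (u : var_idx p d),
     measurable_fun setT (joint (Ys i) (Zs i) (Xs i) (Ws i) u)) ->
  (* (i) identically distributed with the law of (Y, Z, X, W) *)
  (forall i : nat, same_law Pr (joint (Ys i) (Zs i) (Xs i) (Ws i)) (joint Y Z X W)) ->
  (* (i) sample first moments converge in probability *)
  (forall u : var_idx p d,
     cvg_in_prob Pr
       (fun N w => N%:R^-1 * \sum_(i < N) joint (Ys i) (Zs i) (Xs i) (Ws i) u w)
       (mean Pr (joint Y Z X W u))) ->
  (* (i) sample second moments converge in probability *)
  (forall u v : var_idx p d,
     cvg_in_prob Pr
       (fun N w => N%:R^-1 * \sum_(i < N)
          (joint (Ys i) (Zs i) (Xs i) (Ws i) u w *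
           joint (Ys i) (Zs i) (Xs i) (Ws i) v w))
       (mean Pr (fun w => joint Y Z X W u w * joint Y Z X W v w))) ->
  (* (ii) eps_i is uncorrelated with W_i - X_i *)
  (forall (i : nat) (j : 'I_d),
     covariance Pr
       (fun w => Ys i w - alpha - \sum_(l < p) Zs i l w * betaZ l
                 - \sum_(j' < d) Xs i j' w * betaX j')
       (fun w => Ws i j w - Xs i j w) = 0%E) ->
  (* (iii) Cov(Z, W) and Cov(Z, X) are positive definite *)
  posdef (covmx Pr (catRV Z W)) ->
  posdef (covmx Pr (catRV Z X)) ->
  (* No Benefit *)
  (forall j : 'I_d, betaX j <= 0) ->
  (forall l : 'I_p, l \in Pol -> betaZ l <= 0) ->
  (* Weak Partial PC+ : pcor(Z^(l), X^(j) | (Z^(m))_{m <> l}) > 0 *)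
  (forall (l : 'I_p) (j : 'I_d), l \in Pol ->
     0 < pcor Pr (catRV Z (fun _ : 'I_1 => X j)) (lshift 1 l) (rshift p ord0)) ->
  (* the omitted-variable bias exists (as a plim) and is nonpositive on Pol *)
  exists bias : 'I_p -> R,
    (forall k : 'I_p,
       cvg_in_prob Pr (fun N w => ols_Z Ys Zs N w k - betaZ k) (bias k)) /\
    (forall k : 'I_p, k \in Pol -> bias k <= 0).
Proof.
move=> hL2 hmin hmeas hlaw h1 h2 hii hZW hZX hbX hbZ hpc.
have hY : Y \in Lfun Pr 2%E := hL2 (@VY p d).
have hZ : forall l, Z l \in Lfun Pr 2%E := fun l => hL2 (@VZ p d l).
have hX : forall j, X j \in Lfun Pr 2%E := fun j => hL2 (@VX p d j).
set EY := mean Pr Y.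
set EZ := fun l => mean Pr (Z l).
set EX := fun j => mean Pr (X j).
set EZZ := fun l m => mean Pr (fun w => Z l w * Z m w).
set EZX := fun l j => mean Pr (fun w => Z l w * X j w).
set EZY := fun l => mean Pr (fun w => Z l w * Y w).
have NE0' := NE0 Pr p d Y Z X alpha betaZ betaX hY hZ hX hmin.
have NEl' := NEl Pr p d Y Z X alpha betaZ betaX hY hZ hX hmin.
have catZX_l : forall l, catRV Z X (lshift d l) = Z l by move=> l; rewrite /catRV split_l.
have catZX_r : forall j, catRV Z X (rshift p j) = X j by move=> j; rewrite /catRV split_r.
have AE : Amx R p EZ EZZ = \matrix_(l, m) covmx Pr (catRV Z X) (lshift d l) (lshift d m).
  apply/matrixP => l m; rewrite !mxE catZX_l catZX_l covE //.
have hA : Amx R p EZ EZZ \in unitmx.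
  rewrite AE; apply: posdef_unit; apply: posdef_sub => //; exact: lshift_inj.
have BE : forall l j, Bmx R p d EZ EX EZX l j = cov Pr (Z l) (X j).
  by move=> l j; rewrite !mxE covE.
set Mc := Mcm R p EZ EZZ; set mc := mcm R p EY EZY.
have hM : Mc \in unitmx := @Mc_unit R p EZ EZZ hA.
have th := @theta_eq R p d EY EZ EX EZZ EZX EZY alpha betaZ betaX hA NE0' NEl'.
set gm := gam R p d EZ EX EZZ EZX betaX in th.
have gmE : forall k, gm k 0 = \sum_j (invmx (Amx R p EZ EZZ) *m Bmx R p d EZ EX EZX) k j * betaX j.
  by move=> k; rewrite /gm /gam mulmxA mxE; apply: eq_bigr => j _; rewrite [in RHS]mxE; congr (_ * _); rewrite mxE.
have pos : forall k j, k \in Pol -> 0 < (invmx (Amx R p EZ EZZ) *m Bmx R p d EZ EX EZX) k j.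
  move=> k j kP.
  pose f (a : 'I_(p + 1)) : 'I_(p + d) :=
    match fintype.split a with inl l => lshift d l | inr _ => rshift p j end.
  have catS : forall a, catRV Z (fun _ : 'I_1 => X j) a = catRV Z X (f a).
    move=> a; rewrite /catRV /f; case: (fintype.split a).
      by move=> l; rewrite split_l.
    by move=> o; rewrite split_r.
  have finj : injective f.
    move=> a b; rewrite /f -[a]splitK -[b]splitK.
    case: (fintype.split a); case: (fintype.split b).
    - by move=> b' a'; rewrite !split_l => /lshift_inj ->.
    - by move=> b' a'; rewrite split_l split_r => /eqP; rewrite eq_lrshift.
    - by move=> b' a'; rewrite split_l split_r => /eqP; rewrite eq_rlshift.
    - by move=> b' a' _; rewrite (ord1 a') (ord1 b').
  have SE : covmx Pr (catRV Z (fun _ : 'I_1 => X j)) =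
            \matrix_(a, b) covmx Pr (catRV Z X) (f a) (f b).
    by apply/matrixP => a b; rewrite !mxE !catS.
  have pS : posdef (covmx Pr (catRV Z (fun _ : 'I_1 => X j))).
    by rewrite SE; apply: posdef_sub.
  have := @sign_lemma R p (Amx R p EZ EZZ) (\col_l Bmx R p d EZ EX EZX l j) _ pS.
  have -> : (invmx (Amx R p EZ EZZ) *m Bmx R p d EZ EX EZX) k j =
            (invmx (Amx R p EZ EZZ) *m \col_l Bmx R p d EZ EX EZX l j) k 0.
    by rewrite !mxE; apply: eq_bigr => l _; rewrite !mxE.
  apply => //.
  - by move=> l m; rewrite SE !mxE /f !split_l !catZX_l covE.
  - by move=> l; rewrite SE !mxE /f split_l split_r catZX_l catZX_r covE.
  - by have := hpc k j kP; rewrite /pcor.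
exists (fun k => (invmx Mc *m mc) (rshift 1 k) 0 - betaZ k); split; last first.
  move=> k kP; rewrite th addrC addKr gmE.
  apply: sumr_le0 => j _; apply: mulr_ge0_le0 => //.
  by apply: ltW; apply: pos.
move=> k.
pose dz (n : nat) (c : 'I_(1 + p)) (w : T) : R :=
  match fintype.split c with inl _ => 1 | inr l => Zs n l w end.
pose I := (('I_(1 + p) * 'I_(1 + p)) + 'I_(1 + p))%type.
pose U (i : I) (N : nat) (w : T) : R :=
  match i with
  | inl ab => N%:R^-1 * \sum_(n < N) (dz n ab.1 w * dz n ab.2 w)
  | inr a => N%:R^-1 * \sum_(n < N) (dz n a w * Ys n w) end.
pose cc (i : I) : R := match i with inl ab => Mc ab.1 ab.2 | inr a => mc a 0 end.
have hdz : forall n c, measurable_fun setT (dz n c).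
  move=> n c; rewrite /dz; case: (fintype.split c).
    by move=> o; exact: measurable_cst.
  by move=> l; exact: (hmeas n (@VZ p d l)).
have hYs : forall n, measurable_fun setT (Ys n) := fun n => hmeas n (@VY p d).
apply: (@cip_main _ _ _ Pr I U cc).
- move=> [[a b]|a] N; apply: mf_mul; try exact: measurable_cst;
    apply: mf_sum => n; apply: mf_mul => //.
- move=> [[a b]|a]; rewrite /U /cc /dz /=.
    rewrite /Mc /Mcm mxE.
    case: (fintype.split a); case: (fintype.split b).
    + by move=> ? ?; apply: cip_one.
    + move=> m ?; apply: (cip_eq Pr _ _ _ _ (h1 (@VZ p d m))) => N w.
      by under eq_bigr do rewrite mul1r.
    + move=> ? l; apply: (cip_eq Pr _ _ _ _ (h1 (@VZ p d l))) => N w.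
      by under eq_bigr do rewrite mulr1.
    + by move=> m l; exact: (h2 (@VZ p d l) (@VZ p d m)).
  rewrite /mc /mcm mxE; case: (fintype.split a).
  + move=> ?; apply: (cip_eq Pr _ _ _ _ (h1 (@VY p d))) => N w.
    by under eq_bigr do rewrite mul1r.
  + by move=> l; exact: (h2 (@VZ p d l) (@VY p d)).
- move=> N; apply: mf_subc; rewrite /ols_Z /=.
  apply: mf_mulmx.
    apply: mf_invmx; apply: mf_mulmx; [apply: mf_tr|]; apply: mf_mx => i c; exact: hdz.
  apply: mf_mulmx; [apply: mf_tr; apply: mf_mx => i c; exact: hdz|].
  by apply: mf_mx => i c; apply: hYs.
- move=> e e0.
  pose Mx (x : I -> R) : 'M[R]_(1 + p) := \matrix_(a, b) x (inl (a, b)).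
  pose mx (x : I -> R) : 'cV[R]_(1 + p) := \col_a x (inr a).
  pose G (x : I -> R) := \sum_b ((\det (Mx x))^-1 * \adj (Mx x) (rshift 1 k) b) * mx x b 0.
  have McE : Mx cc = Mc by apply/matrixP => a b; rewrite [LHS]mxE.
  have mcE : mx cc = mc by apply/matrixP => a i; rewrite (ord1 i) [LHS]mxE.
  have detc : \det Mc != 0 by move: hM; rewrite unitmxE unitfE.
  have ctM : forall a b, @ctsat R I cc (fun x => Mx x a b).
    move=> a b; apply: (@ct_ext _ _ cc (fun x => x (inl (a, b)))) => [x|]; first by rewrite mxE.
    exact: ct_proj.
  have cD : @ctsat R I cc (fun x => \det (Mx x)) := @ct_det R I cc _ Mx ctM.
  have cG : @ctsat R I cc G.
    apply: ct_sum => b; apply: ct_mul.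
      apply: ct_mul; first by apply: ct_inv => //; rewrite McE.
      exact: ct_adj.
    apply: (@ct_ext _ _ cc (fun x => x (inr b))) => [x|]; first by rewrite mxE.
    exact: ct_proj.
  have [d1 d10 hd1] := cG e e0.
  have dc0 : 0 < `|\det Mc| by rewrite normr_gt0.
  have [d2 d20 hd2] := cD _ dc0.
  exists (Num.min d1 d2); first by rewrite lt_min d10 d20.
  move=> N w N0 hx.
  set x := fun i => U i N w.
  have hx1 : forall i, `|x i - cc i| < d1 by move=> i; have := hx i; rewrite lt_min => /andP[].
  have hx2 : forall i, `|x i - cc i| < d2 by move=> i; have := hx i; rewrite lt_min => /andP[].
  have dx : \det (Mx x) != 0.
    have := hd2 x hx2; rewrite McE; apply: contraTneq => ->.
    by rewrite sub0r normrN ltxx.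
  have NR : (N%:R : R) != 0 by rewrite pnatr_eq0 -lt0n.
  have key : ols_Z Ys Zs N w k = G x.
    rewrite /ols_Z /=.
    set D := \matrix_(i < N, c < 1 + p) _.
    set y := \col_(i < N) _.
    have DD : D^T *m D = N%:R *: Mx x.
      apply/matrixP => a b; rewrite !mxE mulrA mulfV // mul1r.
      by apply: eq_bigr => n _; rewrite !mxE.
    have Dy : D^T *m y = N%:R *: mx x.
      apply/matrixP => a i; rewrite (ord1 i) !mxE mulrA mulfV // mul1r.
      by apply: eq_bigr => n _; rewrite !mxE.
    rewrite DD Dy invmx_scale //; last by rewrite unitmxE unitfE.
    by rewrite invmx_entry.
  have key2 : (invmx Mc *m mc) (rshift 1 k) 0 = G cc by rewrite /G McE mcE invmx_entry.
  rewrite key key2.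
  have -> : G x - betaZ k - (G cc - betaZ k) = G x - G cc by ring.
  exact: hd1.
Qed.
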